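(* Consider the two-player non-cooperative pricing game $\langle \mathcal{R}, (P_i)_{i\in\mathcal{R}}, (U_i)_{i\in\mathcal{R}}\rangle$ between two multi-homing mobile devices (MMD relays) $\mathcal{R}=\{r_1,r_2\}$, in which the strategy of player $r_i$ is its charging price $p_{r_i}\in[0,+\infty)$ and, with the offered bandwidths $\omega_1,\omega_2>0$ held fixed, the utility of player $r_i$ ($i\in\{1,2\}$, $j\neq i$) is $$U_i(p_{r_i},p_{r_j}) \;=\; p_{r_i}\cdot \frac{n}{1+2^{\,p_{r_i}-p_{r_j}}\,\dfrac{\omega_j Y_j}{\omega_i Y_i}} \;-\; c_i\,\omega_i .$$ Then this game has a pure-strategy Nash equilibrium.
   Context: Here $n>0$ is the total number of ordinary mobile devices (OMDs) in the system, and the expression $n/(1+2^{p_{r_i}-p_{r_j}}\omega_jY_j/(\omega_iY_i))$ is the number of OMDs attached to $r_i$ at the evolutionary equilibrium of the OMDs' relay-selection game. $c_i\ge 0$ is the relay cost of $r_i$ per unit bandwidth. $Y_i=\max\{\tau_i,b_i\}>0$ is a channel-quality constant, where $b_i=1+SNR_{s_i d_i}$, $\tau_i=1+SNR_{s_i d_i}+SNR_{s_i r_i d_i}$, with $SNR_{s_i d_i}=P|h_{s_id_i}|^2/\sigma^2$ and $SNR_{s_ir_id_i}=\frac{P^2|h_{s_ir_i}|^2|h_{r_id_i}|^2}{\sigma^2(\sigma^2+P|h_{s_ir_i}|^2+P|h_{r_id_i}|^2)}$ (transmit power $P>0$, noise variance $\sigma^2>0$, channel gains $h$ between source $s_i$,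 relay $r_i$, destination $d_i$). A pure Nash equilibrium is a pair $(p_{r_1}^*,p_{r_2}^* )$ such that for each $i$, $U_i(p_{r_i}^*,p_{r_j}^* )\ge U_i(p_{r_i},p_{r_j}^* )$ for all $p_{r_i}\ge 0$. *)

(* Defs.v *)
From Stdlib Require Import Reals.
Open Scope R_scope.

(* Channel-gain squared magnitudes |h|^2 are given as nonnegative reals. *)
Definition SNR_direct (P sigma2 g_sd : R) : R := P * g_sd / sigma2.

Definition SNR_relay (P sigma2 g_sr g_rd : R) : R :=
  (P ^ 2 * g_sr * g_rd) / (sigma2 * (sigma2 + P * g_sr + P * g_rd)).

Definition b_const (P sigma2 g_sd : R) : R := 1 + SNR_direct P sigma2 g_sd.

Definition tau_const (P sigma2 g_sd g_sr g_rd : R) : R :=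
  1 + SNR_direct P sigma2 g_sd + SNR_relay P sigma2 g_sr g_rd.

Definition Y_const (P sigma2 g_sd g_sr g_rd : R) : R :=
  Rmax (tau_const P sigma2 g_sd g_sr g_rd) (b_const P sigma2 g_sd).

Definition utility (n c_i w_i Y_i w_j Y_j p_i p_j : R) : R :=
  p_i * (n / (1 + Rpower 2 (p_i - p_j) * (w_j * Y_j / (w_i * Y_i)))) - c_i * w_i.

Definition is_pure_NE (U1 U2 : R -> R -> R) (p1 p2 : R) : Prop :=
  0 <= p1 /\ 0 <= p2 /\
  (forall q1, 0 <= q1 -> U1 p1 p2 >= U1 q1 p2) /\
  (forall q2, 0 <= q2 -> U2 p2 p1 >= U2 q2 p1).

(* Main.v *)
Require Import Defs.
From Stdlib Require Import Reals Lra.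
Open Scope R_scope.
Lemma exp_ge1 t : 1 + t <= exp t.
Proof. destruct (Req_dec t 0) as [->|H]. rewrite exp_0; lra. left; now apply exp_ineq1. Qed.

Lemma ln2_pos : 0 < ln 2.
Proof. rewrite <- ln_1. apply ln_increasing; lra. Qed.

Lemma best (b P Q : R) : 0 < b ->
  P * ln 2 * (b * Rpower 2 (P - Q)) = 1 + b * Rpower 2 (P - Q) ->
  forall q, q / (1 + b * Rpower 2 (q - Q)) <= P / (1 + b * Rpower 2 (P - Q)).
Proof.
  intros hb HP q.
  replace (q - Q) with ((P - Q) + (q - P)) by ring.
  rewrite Rpower_plus.
  assert (HR : Rpower 2 (q - P) = exp ((q - P) * ln 2)) by reflexivity.
  rewrite HR.
  set (X := b * Rpower 2 (P - Q)) in *.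
  assert (HX : 0 < X). { unfold X, Rpower. pose proof (exp_pos ((P-Q) * ln 2)). nra. }
  assert (HE := exp_ge1 ((q - P) * ln 2)).
  assert (Hk := ln2_pos).
  set (E := exp ((q - P) * ln 2)) in *.
  assert (HE0 : 0 < E) by apply exp_pos.
  replace (b * (Rpower 2 (P - Q) * E)) with (X * E) by (unfold X; ring).
  clearbody X E.
  assert (H1 : q * ln 2 * X <= 1 + X * E) by nra.
  unfold Rdiv.
  apply (Rmult_le_reg_r ((1 + X * E) * (1 + X))). nra.
  replace (q * / (1 + X * E) * ((1 + X * E) * (1 + X))) with (q * (1+X)) by (field; nra).
  replace (P * / (1 + X) * ((1 + X * E) * (1 + X))) with (P * (1+X*E)) by (field; nra).
  apply (Rmult_le_reg_r (ln 2 * X)). nra.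
  replace (P * (1 + X * E) * (ln 2 * X)) with ((P * ln 2 * X) * (1 + X*E)) by ring.
  rewrite HP.
  replace (q * (1 + X) * (ln 2 * X)) with ((1+X) * (q * ln 2 * X)) by ring.
  apply Rmult_le_compat_l; lra.
Qed.

Lemma Y_pos P sigma2 g_sd g_sr g_rd : 0 < P -> 0 < sigma2 -> 0 <= g_sd ->
  0 < Y_const P sigma2 g_sd g_sr g_rd.
Proof.
  intros HP Hs Hg. unfold Y_const.
  eapply Rlt_le_trans; [| apply Rmax_r].
  unfold b_const, SNR_direct.
  assert (0 <= P * g_sd / sigma2).
  { unfold Rdiv. apply Rmult_le_pos. nra. left; now apply Rinv_0_lt_compat. }
  lra.
Qed.

Lemma util_le n c wi Yi wj Yj p q pj : 0 < n ->
  q / (1 + Rpower 2 (q - pj) * (wj * Yj / (wi * Yi))) <=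
  p / (1 + Rpower 2 (p - pj) * (wj * Yj / (wi * Yi))) ->
  utility n c wi Yi wj Yj p pj >= utility n c wi Yi wj Yj q pj.
Proof.
  intros Hn H. unfold utility.
  apply Rle_ge. apply Rplus_le_compat_r.
  replace (q * (n / (1 + Rpower 2 (q - pj) * (wj * Yj / (wi * Yi)))))
    with (n * (q / (1 + Rpower 2 (q - pj) * (wj * Yj / (wi * Yi))))) by (unfold Rdiv; ring).
  replace (p * (n / (1 + Rpower 2 (p - pj) * (wj * Yj / (wi * Yi)))))
    with (n * (p / (1 + Rpower 2 (p - pj) * (wj * Yj / (wi * Yi))))) by (unfold Rdiv; ring).
  apply Rmult_le_compat_l; lra.
Qed.

Lemma psi_root a : 0 < a -> { u | u - exp (- u) / a + a * exp u = 0 }.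
Proof.
  intros Ha.
  destruct (IVT (fun u => u - exp (- u) / a + a * exp u) (- a) (/ a)) as [u [_ Hu]].
  - apply derivable_continuous. unfold Rdiv. reg.
  - assert (0 < / a) by (apply Rinv_0_lt_compat; lra). lra.
  - simpl. rewrite Ropp_involutive.
    assert (exp (- a) <= 1). { rewrite <- exp_0. destruct (Rle_dec (-a) 0); [|lra].
      apply Rlt_le, exp_increasing; lra. }
    assert (0 < exp a / a) by (apply Rdiv_lt_0_compat; [apply exp_pos|lra]).
    nra.
  - simpl.
    assert (0 < /a) by (apply Rinv_0_lt_compat; lra).
    assert (exp (- / a) <= 1). { rewrite <- exp_0. apply Rlt_le, exp_increasing; lra. }
    assert (exp (- / a) / a <= / a). { unfold Rdiv. nra. }
    pose proof (exp_pos (/ a)). nra.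
  - exists u. exact Hu.
Qed.
Theorem theorem1
  (n : nat) (P sigma2 : R)
  (g1_sd g1_sr g1_rd g2_sd g2_sr g2_rd : R)
  (w1 w2 c1 c2 : R) :
  (0 < n)%nat -> 0 < P -> 0 < sigma2 ->
  0 <= g1_sd -> 0 <= g1_sr -> 0 <= g1_rd ->
  0 <= g2_sd -> 0 <= g2_sr -> 0 <= g2_rd ->
  0 < w1 -> 0 < w2 -> 0 <= c1 -> 0 <= c2 ->
  let Y1 := Y_const P sigma2 g1_sd g1_sr g1_rd in
  let Y2 := Y_const P sigma2 g2_sd g2_sr g2_rd in
  let U1 := fun p1 p2 => utility (INR n) c1 w1 Y1 w2 Y2 p1 p2 in
  let U2 := fun p2 p1 => utility (INR n) c2 w2 Y2 w1 Y1 p2 p1 in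
  exists p1 p2 : R, is_pure_NE U1 U2 p1 p2.
Proof.
  intros Hn HP Hs H1 _ _ H2 _ _ Hw1 Hw2 _ _ Y1 Y2 U1 U2.
  assert (HY1 : 0 < Y1) by (apply Y_pos; auto).
  assert (HY2 : 0 < Y2) by (apply Y_pos; auto).
  assert (HnR : 0 < INR n) by (apply lt_0_INR; exact Hn).
  set (a := w2 * Y2 / (w1 * Y1)).
  assert (Ha : 0 < a) by (unfold a; apply Rdiv_lt_0_compat; nra).
  assert (Ha' : w1 * Y1 / (w2 * Y2) = / a) by (unfold a; field; split; lra).
  destruct (psi_root a Ha) as [u Hu].
  set (X := a * exp u).
  assert (HX : 0 < X) by (unfold X; pose proof (exp_pos u); nra).
  assert (Hk := ln2_pos).
  set (p1 := (1 + X) / (ln 2 * X)).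
  set (p2 := (1 + X) / ln 2).
  assert (Hd : (p1 - p2) * ln 2 = u).
  { assert (Hu' : u = / X - X).
    { unfold X. rewrite exp_Ropp in Hu. rewrite Rinv_mult. 
      assert (exp u > 0) by apply exp_pos.
      replace (/ exp u / a) with (/ a * / exp u) in Hu by (unfold Rdiv; ring). lra. }
    rewrite Hu'. unfold p1, p2. field. lra. }
  assert (E1 : Rpower 2 (p1 - p2) * a = X).
  { unfold Rpower. rewrite Hd. unfold X. ring. }
  assert (E2 : Rpower 2 (p2 - p1) * / a = / X).
  { unfold Rpower. replace ((p2 - p1) * ln 2) with (- u) by lra.
    rewrite exp_Ropp. unfold X. rewrite Rinv_mult. ring. }
  exists p1, p2.
  assert (Hp1 : 0 < p1) by (unfold p1; apply Rdiv_lt_0_compat; nra).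
  assert (Hp2 : 0 < p2) by (unfold p2; apply Rdiv_lt_0_compat; nra).
  split; [lra|]. split; [lra|]. split.
  - intros q _. unfold U1. apply util_le; [exact HnR|].
    fold a. rewrite !(Rmult_comm (Rpower 2 _) a).
    apply best; [exact Ha|].
    rewrite (Rmult_comm a), E1. unfold p1. field. lra.
  - intros q _. unfold U2. apply util_le; [exact HnR|].
    rewrite Ha'.
    rewrite !(Rmult_comm (Rpower 2 _) (/ a)).
    apply best; [apply Rinv_0_lt_compat; exact Ha|].
    rewrite (Rmult_comm (/ a)), E2. unfold p2. field. lra.
Qed.
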